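(* Let $m\ge 2$, $n\ge 1$, and let $\overrightarrow{K_{1,n}}$ be an orientation of the star $K_{1,n}$. Let $m\overrightarrow{K_{1,n}}$ be the disjoint union of $m$ copies of $\overrightarrow{K_{1,n}}$. Then $m\overrightarrow{K_{1,n}}$ is $\{0,2\}$-antimagic and $\{0,1,2\}$-antimagic if and only if each center is neither a sink nor a source.
   Context: The center of a star $K_{1,n}$ is its vertex of degree $n$ (for $n=1$, either vertex); a source is a vertex of in-degree $0$ and a sink a vertex of out-degree $0$. In an oriented graph $\overrightarrow{G}$, $d(u,v)$ is the length of a shortest directed path from $u$ to $v$ ($d(u,u)=0$, $d(u,v)=\infty$ if there is none). Let $\partial=\max\{d(u,v)<\infty : u,v\in V(\overrightarrow{G})\}$. A distance set is a nonempty $D\subseteq\{0,1,\dots,\partial\}$. The $D$-neighborhood of $u$ is $N_D(u)=\{v : d(u,v)\in D\}$. For a bijection $f:V(\overrightarrow{G})\to\{1,\dots,|V(\overrightarrow{G})|\}$, the $D$-weight of $u$ is $\omega_D(u)=\sum_{v\in N_D(u)} f(v)$. $\overrightarrow{G}$ is $D$-antimagic if $D\subseteq\{0,\dots,\partial\}$ (so $\{0,2\}$- or $\{0,1,2\}$-antimagic requires $\partial\ge 2$) and there is such a bijection $f$ with all $D$-weights pairwise distinct. *)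

(* Defs.v *)
From mathcomp Require Import all_boot.
From mathcomp Require Import all_order.
Set Implicit Arguments. Unset Strict Implicit. Unset Printing Implicit Defensive.

Section OrientedGraphs.
Variables (T : finType) (arc : rel T).

Fixpoint walkn (k : nat) (u v : T) : bool :=
  if k is k'.+1 then [exists w, arc u w && walkn k' w v] else u == v.

(* d(u,v) = k : shortest directed path from u to v has length k
   (a shortest walk is a shortest path); d(u,u) = 0 *)
Definition is_dist (u v : T) (k : nat) : bool :=
  walkn k u v && [forall j : 'I_k, ~~ walkn j u v].

Definition le_diam (k : nat) : Prop :=
  exists u v j, is_dist u v j /\ k <= j.

Definition inND (D : seq nat) (u v : T) : bool :=
  has (is_dist u v) D.

Definition omegaD (D : seq nat) (f : T -> nat) (u : T) : nat :=
  \sum_(v | inND D u v) f v.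

Definition labeling (f : T -> nat) : Prop :=
  injective f /\ forall x, 0 < f x <= #|T|.

Definition antimagic (D : seq nat) : Prop :=
  D != [::] /\ (forall k, k \in D -> le_diam k) /\
  exists f, labeling f /\ injective (omegaD D f).

End OrientedGraphs.

(* Oriented star K_{1,n}: vertex None is the center, Some k the k-th leaf;
   o k = true means the arc goes center -> leaf k, false means leaf k -> center. *)
Definition star_arc (n : nat) (o : 'I_n -> bool) (a b : option 'I_n) : bool :=
  match a, b with
  | None, Some k => o k
  | Some k, None => ~~ o k
  | _, _ => false
  end.

(* m disjoint copies of the oriented star: vertices (copy index, star vertex) *)
Definition mstar_arc (m n : nat) (o : 'I_n -> bool) : rel ('I_m * option 'I_n) :=
  fun x y => (x.1 == y.1) && star_arc o x.2 y.2.

(* center is neither a sink (has an out-arc) nor a source (has an in-arc) *)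
Definition center_not_sink_source (n : nat) (o : 'I_n -> bool) : Prop :=
  (exists k, o k) /\ (exists k, ~~ o k).

Arguments mstar_arc m {n} o.

(* Main.v *)
Require Import Defs.
From mathcomp Require Import all_boot.
From mathcomp Require Import zify.
Set Implicit Arguments. Unset Strict Implicit. Unset Printing Implicit Defensive.

Section Star.
Variables (m n : nat) (o : 'I_n -> bool).
Local Notation T := ('I_m * option 'I_n)%type.
Local Notation arc := (mstar_arc m o).

Definition outl (x : option 'I_n) := if x is Some k then o k else false.
Definition inl_ (x : option 'I_n) := if x is Some k then ~~ o k else false.
Definition W2 (u v : T) := [&& v.1 == u.1, inl_ u.2 & outl v.2].

Lemma walk1E u v : walkn arc 1 u v = arc u v.
Proof.
apply/existsP/idP => [[w /andP[h /eqP <-]]|h] //.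
by exists v; rewrite h eqxx.
Qed.

Lemma walk2E u v : walkn arc 2 u v = W2 u v.
Proof.
apply/existsP/idP.
- case=> w /andP[h1 h2]; move: h2; rewrite -/(walkn arc 1 w v) walk1E => h2; move: h1 h2.
  case: u => [i x]; case: w => [j y]; case: v => [l z]; rewrite /mstar_arc /W2 /=.
  case/andP=> /eqP-> h1 /andP[/eqP-> h2]; rewrite eqxx /=.
  case: x y z h1 h2 => [x|] [y|] [z|] //= h1 h2; try by rewrite h1 h2.
  by rewrite h1 in h2.
- case/and3P => e1 h1 h2; exists (u.1, None).
  apply/andP; split; last (apply/existsP; exists v; rewrite eqxx andbT).
    rewrite /mstar_arc /= eqxx /=; by case: (u.2) h1.
  rewrite /mstar_arc /= (eqP e1) eqxx /=; by case: (v.2) h2.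
Qed.

Lemma arc_irr u : arc u u = false.
Proof. case: u => i [x|]; rewrite /mstar_arc /= ?eqxx /= //; by case: (o x). Qed.

Lemma dist0 u v : is_dist arc u v 0 = (u == v).
Proof. rewrite /is_dist /=; case: (u == v) => //=; by apply/forallP => -[]. Qed.

Lemma dist1 u v : is_dist arc u v 1 = arc u v.
Proof.
rewrite /is_dist walk1E; apply/andP/idP => [[]//|h]; split => //.
apply/forallP => -[[|//] _] /=; apply/eqP => e; by rewrite e arc_irr in h.
Qed.

Lemma W2_arc u v : W2 u v -> (u != v) && ~~ arc u v.
Proof.
case: u v => [i [x|]] [j [y|]]; rewrite /W2 /mstar_arc /= ?andbF //=.
case/and3P => _ h1 h2; apply/andP; split.
  by apply/negP => /eqP [_ e]; rewrite e h2 in h1.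
by [].
Qed.

Lemma dist2 u v : is_dist arc u v 2 = W2 u v.
Proof.
rewrite /is_dist walk2E; case h: (W2 u v) => //=.
case/andP: (W2_arc h) => h1 h2.
apply/forallP => -[[|[|//]] _] /=; first by [].
by have := walk1E u v; rewrite /= => ->.
Qed.

Lemma inND02 u v : inND arc [:: 0; 2] u v = (u == v) || W2 u v.
Proof. by rewrite /inND /= dist0 dist2 orbF. Qed.

Lemma inND012 u v : inND arc [:: 0; 1; 2] u v = [|| u == v, arc u v | W2 u v].
Proof. by rewrite /inND /= dist0 dist1 dist2 orbF. Qed.


Lemma sum_copy (F : T -> nat) i :
  \sum_(v : T | (v.1 == i) && outl v.2) F v = \sum_(k | o k) F (i, Some k).
Proof.
rewrite (eq_bigr (fun v => F (v.1, v.2))); last by case.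
rewrite -(pair_big_dep (fun j => j == i) (fun _ x => outl x) (fun j x => F (j, x))) /=.
rewrite big_pred1_eq.
rewrite (reindex_omap Some id); last by case.
by apply: eq_bigl => k /=; rewrite eqxx andbT.
Qed.


Definition rk (P : pred 'I_n) (k : 'I_n) := #|[set j : 'I_n | (j < k) && P j]|.

Lemma rk_lt (P : pred 'I_n) k : P k -> rk P k < #|[set j | P j]|.
Proof.
move=> Pk; apply: proper_card; apply/properP; split.
  by apply/subsetP => j; rewrite !inE => /andP[].
by exists k; rewrite !inE ?Pk // ltnn.
Qed.

Lemma rk_inj (P : pred 'I_n) k k' : P k -> P k' -> rk P k = rk P k' -> k = k'.
Proof.
have H : forall x y : 'I_n, P x -> x < y -> rk P x < rk P y.
  move=> x y Px lxy; apply: proper_card; apply/properP; split.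
    by apply/subsetP => j; rewrite !inE => /andP[h ->]; rewrite (ltn_trans h lxy).
  by exists x; rewrite !inE ?Px ?lxy // ltnn.
move=> Pk Pk' e; case: (ltngtP k k') => [l|l|/val_inj //].
  by have := H _ _ Pk l; rewrite e ltnn.
by have := H _ _ Pk' l; rewrite e ltnn.
Qed.

Definition a := #|[set k | o k]|.
Definition b := #|[set k | ~~ o k]|.
Definition pr := rk o.
Definition qr := rk (fun k => ~~ o k).

Lemma ab : a + b = n.
Proof.
have := cardsC [set k | o k]; rewrite card_ord => <-; congr (_ + _).
by apply: eq_card => k; rewrite !inE.
Qed.

Definition lab (u : T) : nat :=
  match u.2 with
  | None => m * a + u.1 + 1
  | Some k => if o k then pr k * m + u.1 + 1 else m * (a + 1) + u.1 * b + qr k + 1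
  end.

Definition PP := \sum_(k | o k) pr k * m.

Lemma Ssum i : \sum_(v : T | (v.1 == i) && outl v.2) lab v = PP + a * (i + 1).
Proof.
rewrite sum_copy /lab /=.
rewrite (eq_bigr (fun k => pr k * m + (i + 1))); last by move=> k ->; rewrite addnA.
by rewrite big_split /= sum_nat_cond_const.
Qed.


Lemma sumD1 (P : pred T) u (F : T -> nat) : ~~ P u ->
  \sum_(v | (v == u) || P v) F v = F u + \sum_(v | P v) F v.
Proof.
move=> Pu; rewrite (bigD1 u) ?eqxx //; congr (_ + _); apply: eq_bigl => v.
case: (eqVneq v u) => [->|nvu] /=; first by rewrite (negbTE Pu).
by rewrite andbT.
Qed.

Definition Sx (i : 'I_m) := PP + a * (i + 1).

Definition w02 (u : T) :=
  match u.2 with None => lab u | Some k => if o k then lab u else lab u + Sx u.1 end.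
Definition w012 (u : T) :=
  match u.2 with None => lab u + Sx u.1
  | Some k => if o k then lab u else lab u + lab (u.1, None) + Sx u.1 end.

Lemma om02 u : omegaD arc [:: 0; 2] lab u = w02 u.
Proof.
rewrite /omegaD (eq_bigl (fun v => (v == u) || W2 u v)); last by move=> v; rewrite inND02 eq_sym.
rewrite sumD1; last by apply/negP => /W2_arc; rewrite eqxx.
case: u => i [k|] /=; rewrite /w02 /=.
- case ok: (o k).
    by rewrite big_pred0 ?addn0 // => v; rewrite /W2 /= ok andbF.
  congr (_ + _); rewrite /Sx -(Ssum i); apply: eq_bigl => v; rewrite /W2 /= ok.
  done.
- by rewrite big_pred0 ?addn0 // => v; rewrite /W2 /= andbF.
Qed.

Lemma om012 u : omegaD arc [:: 0; 1; 2] lab u = w012 u.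
Proof.
case: u => i [k|]; rewrite /omegaD.
- change (w012 (i, Some k)) with
    (if o k then lab (i, Some k) else lab (i, Some k) + lab (i, None) + Sx i).
  case ok: (o k).
    rewrite (eq_bigl (fun v => v == (i, Some k))); first by rewrite big_pred1_eq.
    move=> v; rewrite inND012 eq_sym; case: v => j [y|]; rewrite /W2 /mstar_arc /= ?ok ?andbF ?orbF //.
  rewrite (eq_bigl (fun v => (v == (i, Some k)) || ((v == (i, None)) || ((v.1 == i) && outl v.2)))).
    rewrite sumD1; last by rewrite /= !xpair_eqE /= ok !andbF.
    rewrite sumD1; last by rewrite /= eqxx.
    by rewrite Ssum addnA.
  move=> v; rewrite inND012 eq_sym; case: v => j [y|]; rewrite /W2 /mstar_arc /= ?ok ?andbF ?orbF ?andbT // !xpair_eqE /= ?andbF ?andbT ?orbF //; by rewrite eq_sym.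
- change (w012 (i, None)) with (lab (i, None) + Sx i).
  rewrite (eq_bigl (fun v => (v == (i, None)) || ((v.1 == i) && outl v.2))).
    by rewrite sumD1 ?Ssum //= andbF.
  move=> v; rewrite inND012 eq_sym; case: v => j [y|]; rewrite /W2 /mstar_arc /= ?andbF ?orbF ?andbT //; by rewrite [i == j]eq_sym.
Qed.


Lemma divmod_eq (x y i j d : nat) : i < d -> j < d -> x * d + i = y * d + j -> x = y /\ i = j.
Proof.
move=> hi hj e; have xy : x = y.
  case: (ltngtP x y) => // l; nia.
by subst; split => //; lia.
Qed.

Lemma pr_lt k : o k -> pr k < a.
Proof. exact: rk_lt. Qed.
Lemma qr_lt k : ~~ o k -> qr k < b.
Proof. exact: (@rk_lt (fun k => ~~ o k)). Qed.

Lemma lab_inj : injective lab.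
Proof.
case=> i [k|]; case=> j [k'|]; rewrite /lab /=.
- have hi := ltn_ord i; have hj := ltn_ord j.
  case ok: (o k); case ok': (o k') => e.
  + have hk := pr_lt ok; have hk' := pr_lt ok'.
    have [e1 e2] : pr k = pr k' /\ (i : nat) = j by apply: (divmod_eq hi hj); lia.
    by rewrite (rk_inj ok ok' e1) (val_inj e2).
  + have hk := pr_lt ok; nia.
  + have hk := pr_lt ok'; nia.
  + have hk := qr_lt (negbT ok); have hk' := qr_lt (negbT ok').
    have [e1 e2] : (i : nat) = j /\ qr k = qr k' by apply: (divmod_eq hk hk'); lia.
    by rewrite (@rk_inj (fun k => ~~ o k) _ _ (negbT ok) (negbT ok') e2) (val_inj e1).
- have hi := ltn_ord i; have hj := ltn_ord j.
  case ok: (o k) => e.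
    have hk := pr_lt ok; have : (pr k).+1 * m <= a * m by rewrite leq_mul2r hk orbT.
    nia.
  rewrite mulnDr in e; lia.
- have hi := ltn_ord i; have hj := ltn_ord j.
  case ok: (o k') => e.
    have hk := pr_lt ok; have : (pr k').+1 * m <= a * m by rewrite leq_mul2r hk orbT.
    nia.
  rewrite mulnDr in e; lia.
- move=> e; congr (_, _); apply: val_inj; move/eqP: e; rewrite !eqn_add2r eqn_add2l; exact/eqP.
Qed.


Lemma lab_range u : 0 < lab u <= #|{: T}|.
Proof.
rewrite card_prod card_option !card_ord.
have abn := ab; have hi := ltn_ord u.1.
case: u hi => i [k|] /= hi; rewrite /lab /=; last first.
  apply/andP; split; first by rewrite addn1.
  nia.
case ok: (o k).
  have hk := pr_lt ok; apply/andP; split; first by rewrite addn1.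
  nia.
have hk := qr_lt (negbT ok); apply/andP; split; first by rewrite addn1.
have : i.+1 * b <= m * b by rewrite leq_mul2r hi orbT.
nia.
Qed.

Definition isin (u : T) := inl_ u.2.

Lemma lab_small u : ~~ isin u -> lab u <= m * a.+1.
Proof.
have hi := ltn_ord u.1.
case: u hi => i [k|] /= hi; rewrite /isin /lab /=; last by nia.
case ok: (o k) => //= _; have hk := pr_lt ok.
have : (pr k).+1 * m <= a * m by rewrite leq_mul2r hk orbT.
nia.
Qed.

Lemma w02_inj : injective w02.
Proof.
have key : forall u, isin u -> exists i k, [/\ u = (i, Some k), ~~ o k &
   w02 u = m * (a + 1) + i * (b + a) + qr k + 1 + PP + a].
  case=> i [k|] //=; rewrite /isin /= => ok; exists i, k; split => //.
  rewrite /w02 /lab /Sx /= (negbTE ok); nia.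
have small : forall u, ~~ isin u -> w02 u = lab u.
  case=> i [k|] //=; rewrite /isin /w02 /= => /negPn -> //.
move=> u v; case iu: (isin u); case iv: (isin v).
- have [i [k [-> ok ->]]] := key u iu; have [j [k' [-> ok' ->]]] := key v iv.
  move=> e; have hk := qr_lt ok; have hk' := qr_lt ok'.
  have hb : qr k < b + a by lia.
  have hb' : qr k' < b + a by lia.
  have [e1 e2] : (i : nat) = j /\ qr k = qr k' by apply: (divmod_eq hb hb'); lia.
  by rewrite (@rk_inj (fun k => ~~ o k) _ _ ok ok' e2) (val_inj e1).
- have [i [k [-> ok ->]]] := key u iu; rewrite small ?iv //.
  have := lab_small (negbT iv); nia.
- have [i [k [-> ok ->]]] := key v iv; rewrite small ?iu //.
  have := lab_small (negbT iu); nia.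
- by rewrite !small ?iu ?iv //; apply: lab_inj.
Qed.


Lemma w012_inj : injective w012.
Proof.
have hout : forall i k, o k -> w012 (i, Some k) = pr k * m + i + 1.
  by move=> i k ok; rewrite /w012 /= ok /lab /= ok.
have hin : forall (i : 'I_m) k, ~~ o k -> w012 (i, Some k) =
   m * (a + 1) + i * (b + a + 1) + qr k + 1 + m * a + 1 + PP + a.
  by move=> i k ok; rewrite /w012 /lab /Sx /= (negbTE ok); nia.
have hc : forall (i : 'I_m), w012 (i, None) = m * a + i * (a + 1) + 1 + PP + a.
  by move=> i; rewrite /w012 /lab /Sx /=; nia.
have obd : forall (i : 'I_m) k, o k -> pr k * m + i + 1 <= m * a.
  move=> i k ok; have hk := pr_lt ok; have hi := ltn_ord i.
  have : (pr k).+1 * m <= a * m by rewrite leq_mul2r hk orbT.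
  nia.
move=> [i x] [j y]; have hi := ltn_ord i; have hj := ltn_ord j; case: x => [k|]; case: y => [k'|].
- case ok: (o k); case ok': (o k').
  + rewrite hout // hout // => e; apply: lab_inj; by rewrite /lab /= ok ok'.
  + rewrite hout // hin ?ok' //; have := obd i k ok; nia.
  + rewrite hin ?ok // hout //; have := obd j k' ok'; nia.
  + rewrite hin ?ok // hin ?ok' // => e.
    have hk := qr_lt (negbT ok); have hk' := qr_lt (negbT ok').
    have hb : qr k < b + a + 1 by lia.
    have hb' : qr k' < b + a + 1 by lia.
    have [e1 e2] : (i : nat) = j /\ qr k = qr k' by apply: (divmod_eq hb hb'); lia.
    by rewrite (@rk_inj (fun k => ~~ o k) _ _ (negbT ok) (negbT ok') e2) (val_inj e1).
- rewrite hc; case ok: (o k).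
    rewrite hout //; have := obd i k ok; nia.
  rewrite hin ?ok //.
  have : j * (a + 1) <= m * (a + 1) by rewrite leq_mul2r ltnW ?orbT.
  nia.
- rewrite hc; case ok: (o k').
    rewrite hout //; have := obd j k' ok; nia.
  rewrite hin ?ok //.
  have : i * (a + 1) <= m * (a + 1) by rewrite leq_mul2r ltnW ?orbT.
  nia.
- rewrite !hc => e; congr (_, _); apply: val_inj.
  have [e1 _] : (i : nat) = j /\ 0 = 0 by apply: (@divmod_eq _ _ _ _ (a + 1)) => //; lia.
  done.
Qed.

End Star.

Lemma two_arcs m n (o : 'I_n -> bool) (u w w' : 'I_m * option 'I_n) :
  mstar_arc m o u w -> mstar_arc m o w w' -> center_not_sink_source o.
Proof.
case: u w w' => [i x] [j y] [l z]; rewrite /mstar_arc /= => /andP[_ h1] /andP[_ h2].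
case: x y z h1 h2 => [x|] [y|] [z|] //= h1 h2.
- by split; [exists z | exists x].
- by rewrite h1 in h2.
Qed.

Lemma nec m n (o : 'I_n -> bool) D : 2 \in D -> antimagic (mstar_arc m o) D -> center_not_sink_source o.
Proof.
move=> h2 [_ [hd _]]; have [u [v [j [hj lj]]]] := hd 2 h2.
case: j hj lj => [|[|j]] // /andP[hw _] _.
move: hw => /= /existsP [w /andP [a1 /existsP [w' /andP [a2 _]]]].
exact: two_arcs a1 a2.
Qed.



Theorem mainTheorem8 (m n : nat) (o : 'I_n -> bool) :
  2 <= m -> 1 <= n ->
  (antimagic (mstar_arc m o) [:: 0; 2] <-> center_not_sink_source o) /\
  (antimagic (mstar_arc m o) [:: 0; 1; 2] <-> center_not_sink_source o).
Proof.
move=> hm hn.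
have diam : center_not_sink_source o -> forall k, k <= 2 -> le_diam (mstar_arc m o) k.
  move=> [[k1 o1] [k0 o0]] k lk.
  have i0 : 'I_m := Ordinal (leq_trans (isT : 0 < 2) hm).
  exists (i0, Some k0), (i0, Some k1), 2; split => //.
  by rewrite dist2 /W2 /= eqxx o0 o1.
have lab_ok : labeling (lab o) by split; [exact: lab_inj | exact: lab_range].
split; split.
- by apply: nec; rewrite inE.
- move=> c; split => //; split.
    by move=> k; rewrite !inE => /orP [] /eqP ->; apply: diam.
  exists (lab o); split => // u v; rewrite !om02; exact: w02_inj.
- by apply: nec; rewrite !inE.
- move=> c; split => //; split.
    by move=> k; rewrite !inE => /or3P [] /eqP ->; apply: diam.
  exists (lab o); split => // u v; rewrite !om012; exact: w012_inj.
Qed.
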